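(* Let $a,b,c$ be parameters (real or complex numbers) such that no denominator below vanishes, and put $u(n,a,b,c)=\frac{\prod_{j=0}^{n-1}(b+jc)}{\prod_{j=0}^{n-1}(a+jc)}$. Define, for $n\ge0$, $$T(2n)=\frac{(a+(n-1)c)(b+nc)}{(a+2nc)(a+(2n-1)c)},\qquad T(2n+1)=\frac{(n+1)c\,(a-b+nc)}{(a+2nc)(a+(2n+1)c)},$$ and numbers $A(n,k)$ for integers $n\ge0$ and all integers $k$ by $$A(2n,2k)=\binom{n}{k}u(n-k,a+2kc,b+kc,c),\qquad A(2n+1,2k+1)=\binom{n}{k}u(n-k,a+(2k+1)c,b+(k+1)c,c),$$ and $A(n,k)=0$ whenever $n-k$ is odd. Then $$A(0,k)=[k=0],\qquad A(n,0)=T(0)A(n-1,1)\ (n\ge1),\qquad A(n,k)=A(n-1,k-1)+T(k)A(n-1,k+1)\ (n\ge1,\ k\ge1).$$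
   Context: $\binom{n}{k}$ is the ordinary binomial coefficient, equal to $0$ for $k<0$ or $k>n$. $[P]$ is $1$ if $P$ holds and $0$ otherwise. (For $n=0$ the factor $a-c$ cancels, so $T(0)=b/a$.) *)

(* Defs.v *)
(* Parameters a b c live in an arbitrary numFieldType F
   (covers both the real and the complex case, e.g. R : realType, algC). *)
From HB Require Import structures.
From mathcomp Require Import all_boot all_order all_algebra.
Set Implicit Arguments. Unset Strict Implicit. Unset Printing Implicit Defensive.
Import Order.TTheory GRing.Theory Num.Theory.
Local Open Scope ring_scope.

Section Defs.
Variable F : numFieldType.

Definition u (n : nat) (a b c : F) : F :=
  (\prod_(j < n) (b + j%:R * c)) / (\prod_(j < n) (a + j%:R * c)).

(* T(k); T(0) = b/a (the factor a - c cancels, as stated in the paper). *)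
Definition T (a b c : F) (k : nat) : F :=
  if k == 0%N then b / a
  else if odd k then
    let n := k./2 in
    (n.+1%:R * c * (a - b + n%:R * c)) /
      ((a + (2 * n)%:R * c) * (a + (2 * n).+1%:R * c))
  else
    let n := k./2 in
    ((a + (n%:R - 1) * c) * (b + n%:R * c)) /
      ((a + (2 * n)%:R * c) * (a + ((2 * n)%:R - 1) * c)).

(* A(n,k) for k a natural number:
   A(2m,2j)     = C(m,j) u(m-j, a+2jc, b+jc, c)
   A(2m+1,2j+1) = C(m,j) u(m-j, a+(2j+1)c, b+(j+1)c, c)
   A(n,k) = 0 if n - k odd.
   (When j > m the binomial vanishes, so the truncated m - j is harmless.) *)
Definition Anat (a b c : F) (n k : nat) : F :=
  if odd (n + k) then 0
  else
    let m := n./2 in let j := k./2 in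
    if odd n then
      'C(m, j)%:R * u (m - j) (a + (2 * j).+1%:R * c) (b + j.+1%:R * c) c
    else
      'C(m, j)%:R * u (m - j) (a + (2 * j)%:R * c) (b + j%:R * c) c.

(* A(n,k) for all integers k: for negative k the binomial coefficient
   C(m, j) has j < 0, hence vanishes, so A(n,k) = 0. *)
Definition A (a b c : F) (n : nat) (k : int) : F :=
  match k with
  | Posz k' => Anat a b c n k'
  | Negz _ => 0
  end.

End Defs.

(* Main.v *)
Require Import Defs.
From HB Require Import structures.
From mathcomp Require Import all_boot all_order all_algebra.
From mathcomp Require Import ring zify.
Import Order.TTheory GRing.Theory Num.Theory.
Local Open Scope ring_scope.

Section Proofs.
Variable F : numFieldType.
Variables a b c : F.
Hypothesis hden : forall m : nat, a + m%:R * c != 0.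

Definition W (t p : nat) : F := \prod_(i < p) (a + (t + i)%:R * c).
Definition V (t p : nat) : F := \prod_(i < p) (b + (t + i)%:R * c).

Lemma u_WV p t s : u p (a + t%:R * c) (b + s%:R * c) c = V s p / W t p.
Proof.
rewrite /u /V /W; congr (_ / _); apply: eq_bigr => i _; rewrite natrD mulrDl addrA //.
Qed.

Lemma W_nz t p : W t p != 0.
Proof. rewrite /W; apply/prodf_neq0 => i _; exact: hden. Qed.

Lemma W_l t p : W t p.+1 = (a + t%:R * c) * W t.+1 p.
Proof.
rewrite /W big_ord_recl addn0; congr (_ * _); apply: eq_bigr => i _.
by rewrite /= addnS addSn.
Qed.

Lemma W_r t p : W t p.+1 = W t p * (a + (t + p)%:R * c).
Proof. by rewrite /W big_ord_recr. Qed.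

Lemma V_l t p : V t p.+1 = (b + t%:R * c) * V t.+1 p.
Proof.
rewrite /V big_ord_recl addn0; congr (_ * _); apply: eq_bigr => i _.
by rewrite /= addnS addSn.
Qed.

Lemma V_r t p : V t p.+1 = V t p * (b + (t + p)%:R * c).
Proof. by rewrite /V big_ord_recr. Qed.

Lemma W0 t : W t 0 = 1. Proof. by rewrite /W big_ord0. Qed.
Lemma V0 t : V t 0 = 1. Proof. by rewrite /V big_ord0. Qed.

Lemma Anat_ee m j : Anat a b c (m.*2) (j.*2) =
  'C(m, j)%:R * (V j (m - j) / W (2 * j) (m - j)).
Proof.
by rewrite /Anat -doubleD odd_double !doubleK odd_double u_WV.
Qed.

Lemma Anat_oo m j : Anat a b c (m.*2.+1) (j.*2.+1) =
  'C(m, j)%:R * (V j.+1 (m - j) / W (2 * j).+1 (m - j)).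
Proof.
rewrite /Anat addSn addnS -doubleD /= odd_double /= !uphalf_double.
by rewrite odd_double u_WV.
Qed.

Lemma Anat_eo m j : Anat a b c (m.*2) (j.*2.+1) = 0.
Proof. by rewrite /Anat addnS -doubleD /= odd_double. Qed.

Lemma Anat_oe m j : Anat a b c (m.*2.+1) (j.*2) = 0.
Proof. by rewrite /Anat addSn -doubleD /= odd_double. Qed.

Lemma T_even j : T a b c (j.+1.*2) =
  ((a + (j.+1%:R - 1) * c) * (b + j.+1%:R * c)) /
      ((a + (2 * j.+1)%:R * c) * (a + ((2 * j.+1)%:R - 1) * c)).
Proof. by rewrite /T /= odd_double doubleK. Qed.

Lemma T_odd j : T a b c (j.*2.+1) =
    (j.+1%:R * c * (a - b + j%:R * c)) /
      ((a + (2 * j)%:R * c) * (a + (2 * j).+1%:R * c)).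
Proof. by rewrite /T /= odd_double uphalf_double. Qed.


Lemma neq_eq (x y : F) : x = y -> x != 0 -> y != 0.
Proof. by move->. Qed.

Lemma rec_even m j : Anat a b c (m.+1.*2) (j.+1.*2) =
  Anat a b c (m.*2.+1) (j.*2.+1) + T a b c (j.+1.*2) * Anat a b c (m.*2.+1) (j.+1.*2.+1).
Proof.
rewrite Anat_ee !Anat_oo T_even.
have [ltmj|lejm] := ltnP m j.
  rewrite !bin_small //; try lia.
  by rewrite !mul0r mulr0 addr0.
have [p ->] : exists p, m = (j + p)%N by exists (m - j)%N; lia.
have -> : ((j + p).+1 - j.+1 = p)%N by lia.
have -> : ((j + p) - j = p)%N by lia.
have E : (2 * j.+1 = (2 * j).+2)%N by lia.
rewrite E.
have -> : ((j.+1)%:R - 1 : F) = j%:R by rewrite -natr1 addrK.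
have -> : ((2 * j).+2%:R - 1 : F) = (2 * j).+1%:R by rewrite -natr1 addrK.
case: p => [|q].
  rewrite addn0 !binn bin_small ?ltnSn // !V0 !W0 !divr1 !mul1r mul0r mulr0 addr0 //.
have -> : ((j + q.+1) - j.+1 = q)%N by lia.
rewrite (V_l j.+1 q) (W_l (2 * j).+2 q) (W_l (2 * j).+1 q).
have HY : W (2 * j).+2 q = (a + (2 * j).+2%:R * c) * W (2 * j).+3 q /
   (a + ((2 * j).+2 + q)%:R * c).
  by rewrite -W_l W_r mulfK // hden.
rewrite HY.
set M := (j + q.+1)%N.
have B1 : ('C(M, j)%:R : F) = j.+1%:R * 'C(M.+1, j.+1)%:R / M.+1%:R.
  apply: (canRL (mulfK _)); first by rewrite pnatr_eq0.
  by rewrite -!natrM mulnC mul_bin_diag.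
have B2 : ('C(M, j.+1)%:R : F) = (M.+1 - j.+1)%:R * 'C(M.+1, j.+1)%:R / M.+1%:R.
  apply: (canRL (mulfK _)); first by rewrite pnatr_eq0.
  by rewrite -!natrM mulnC -mul_bin_down.
rewrite B1 B2.
have -> : (M.+1 - j.+1 = q.+1)%N by rewrite /M; lia.
rewrite /M.
set K := ('C(_, _)%:R : F).
have Xnz := W_nz (2 * j).+3 q.
set X := W _ _ in Xnz *.
set Bq := V _ _.
have h1 := hden (2 * j).+2.
have h2 := hden (2 * j).+1.
have h3 := hden ((2 * j).+2 + q).
have h4 : ((j + q.+1).+1%:R : F) != 0 by rewrite pnatr_eq0.
field.
rewrite Xnz /=; apply/and4P; split.
- by move: h4; apply: contra_neq => H; rewrite -H; ring.
- by move: h2; apply: contra_neq => H; rewrite -H; ring.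
- by move: h1; apply: contra_neq => H; rewrite -H; ring.
- by move: h3; apply: contra_neq => H; rewrite -H; ring.
Qed.

Lemma rec_odd m j : Anat a b c (m.*2.+1) (j.*2.+1) =
  Anat a b c (m.*2) (j.*2) + T a b c (j.*2.+1) * Anat a b c (m.*2) (j.+1.*2).
Proof.
rewrite Anat_oo !Anat_ee T_odd.
have [ltmj|lejm] := ltnP m j.
  rewrite !bin_small //; try lia.
  by rewrite !mul0r mulr0 addr0.
have [p ->] : exists p, m = (j + p)%N by exists (m - j)%N; lia.
have -> : ((j + p) - j = p)%N by lia.
have E : (2 * j.+1 = (2 * j).+2)%N by lia.
rewrite E.
case: p => [|q].
  rewrite addn0 !binn bin_small ?ltnSn // !V0 !W0 !divr1 !mul1r mul0r mulr0 addr0 //.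
have -> : ((j + q.+1) - j.+1 = q)%N by lia.
rewrite (V_r j.+1 q) (V_l j q) (W_r (2 * j).+1 q) (W_l (2 * j) q).
have HY : W (2 * j).+2 q = W (2 * j).+1 q * (a + ((2 * j).+1 + q)%:R * c) /
   (a + (2 * j).+1%:R * c).
  by rewrite -W_r W_l [_ * W _ _]mulrC mulfK // hden.
rewrite HY.
set M := (j + q.+1)%N.
have B2 : ('C(M, j.+1)%:R : F) = (M - j)%:R * 'C(M, j)%:R / j.+1%:R.
  apply: (canRL (mulfK _)); first by rewrite pnatr_eq0.
  by rewrite -!natrM mulnC mul_bin_left.
rewrite B2.
have -> : (M - j = q.+1)%N by rewrite /M; lia.
rewrite /M.
set K := ('C(_, _)%:R : F).
have Xnz := W_nz (2 * j).+1 q.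
set X := W _ _ in Xnz *.
set Bq := V _ _.
have h1 := hden (2 * j).+1.
have h2 := hden (2 * j).
have h3 := hden ((2 * j).+1 + q).
have h4 : (j.+1%:R : F) != 0 by rewrite pnatr_eq0.
field.
apply/and5P; split => //.
- by move: h1; apply: contra_neq => H; rewrite -H; ring.
- by move: h3; apply: contra_neq => H; rewrite -H; ring.
- by move: h4; apply: contra_neq => H; rewrite -H; ring.
- by move: h2; apply: contra_neq => H; rewrite -H; ring.
Qed.

Lemma main :
  (forall k : int, A a b c 0 k = (k == 0)%:R) /\
  (forall n : nat, A a b c n.+1 0 = T a b c 0 * A a b c n 1) /\
  (forall (n k : nat), (1 <= k)%N ->
     A a b c n.+1 k%:Z = A a b c n (k%:Z - 1) + T a b c k * A a b c n (k%:Z + 1)).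
Proof.
split; [|split].
- case=> [[|k]|k] /=.
  + by rewrite /Anat /= bin0 /u !big_ord0 divr1 mulr1.
  + rewrite -[k]odd_double_half; move: (odd k) k./2 => [] j /=.
      by rewrite add1n -[(j.*2).+2]/(j.+1.*2) -[0%N]/(0.*2) Anat_ee bin_small // mul0r.
    by rewrite add0n -[0%N]/(0.*2) Anat_eo.
  + by [].
- move=> n; rewrite /A.
  rewrite -[n]odd_double_half; move: (odd n) n./2 => [] m /=.
    rewrite add1n -[0%N]/(0.*2) -[1%N]/(0.*2.+1) -[m.*2.+2]/(m.+1.*2).
    rewrite Anat_ee Anat_oo /T /= !bin0 !subn0 muln0 (V_l 0) (W_l 0).
    have h := hden 0; rewrite mul0r addr0 in h.
    have Xnz := W_nz 1 m; set X := W 1 m in Xnz *.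
    rewrite !mul0r !addr0; field; by rewrite Xnz h.
  rewrite add0n -[0%N]/(0.*2) -[1%N]/(0.*2.+1) Anat_oe Anat_eo mulr0 //.
- move=> n [|k] // _.
  have -> : (k.+1%:Z - 1 = k%:Z) by lia.
  have -> : (k.+1%:Z + 1 = k.+2%:Z) by lia.
  rewrite /A.
  rewrite -[n]odd_double_half -[k]odd_double_half.
  move: (odd n) n./2 (odd k) k./2 => [] m [] j /=; rewrite ?add1n ?add0n.
  + exact: rec_even.
  + rewrite -[m.*2.+2]/(m.+1.*2) -[j.*2.+2]/(j.+1.*2).
    by rewrite Anat_eo !Anat_oe mulr0 addr0.
  + rewrite -[j.*2.+2]/(j.+1.*2) -[j.*2.+3]/(j.+1.*2.+1).
    by rewrite !Anat_eo Anat_oe mulr0 addr0.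
  + exact: rec_odd.
Qed.
End Proofs.

Theorem corollary1 (F : numFieldType) (a b c : F)
  (hden : forall m : nat, a + m%:R * c != 0) :
  (forall k : int, A a b c 0 k = (k == 0)%:R) /\
  (forall n : nat, A a b c n.+1 0 = T a b c 0 * A a b c n 1) /\
  (forall (n k : nat), (1 <= k)%N ->
     A a b c n.+1 k%:Z = A a b c n (k%:Z - 1) + T a b c k * A a b c n (k%:Z + 1)).
Proof. exact: main. Qed.
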